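(* Let $G$ be a finite graph with vertex weights $q_v$ and vertex momenta $p_v\in\mathbb R^d$, and let $\mathcal U_G,\mathcal V_G$ be its generalized Symanzik polynomials. For every edge $e$ of $G$ that is not a self-loop, $$\mathcal U_G=\alpha_e\,\mathcal U_{G-e}+\mathcal U_{G/e},\qquad \mathcal V_G=\alpha_e\,\mathcal V_{G-e}+\mathcal V_{G/e}.$$ Moreover, if every edge of $G$ is a self-loop, then $\mathcal U_G=\prod_e\alpha_e\prod_vq_v$ and $\mathcal V_G=\prod_e\alpha_e\sum_vp_v^2\prod_{v'\neq v}q_{v'}$.
   Context: Incidence numbers: $\epsilon_{ev}=+1$ if $e$ is not a self-loop and starts at $v$, $-1$ if not a self-loop and ends at $v$, $0$ otherwise. $Q_G$ is the $(|E|+|V|)$-square matrix indexed by $E\sqcup V$ with $(Q_G)_{ee'}=\alpha_e\delta_{ee'}$, $(Q_G)_{vv'}=q_v\delta_{vv'}$, $(Q_G)_{ev}=(Q_G)_{ve}=-i\epsilon_{ev}$; $\mathcal U_G=\det Q_G$ and $\mathcal V_G=\mathcal U_G\sum_{v,v'}p_v\cdot p_{v'}(Q_G^{-1})_{vv'}$ (for positive $\alpha,q$; both are polynomials). $G-e$ is $G$ with edge $e$ removed (vertices, weights and momenta unchanged). For $e$ joining distinct vertices $v_1,v_2$, $G/e$ is obtained by removing $e$ and identifying $v_1,v_2$ into one vertex $v_{12}$ carrying all remaining edges of $v_1,v_2$ (other edges between $v_1,v_2$ become self-loops), with weight $q_{v_{12}}=q_{v_1}+q_{v_2}$ and momentum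 $p_{v_{12}}=p_{v_1}+p_{v_2}$. *)

(* Defs.v *)
From HB Require Import structures.
From mathcomp Require Import all_boot all_order all_algebra.
Set Implicit Arguments. Unset Strict Implicit. Unset Printing Implicit Defensive.
Import Order.TTheory GRing.Theory Num.Theory.
Local Open Scope ring_scope.

(* A finite (multi)graph with oriented edges, edge weights alpha_e,
   vertex weights q_v and vertex momenta p_v in C^d (C a numerically
   closed field, e.g. algC, playing the role of the complex numbers). *)
Record wgraph (C : numClosedFieldType) (d : nat) := WGraph {
  vert : finType;
  edge : finType;
  src : edge -> vert;
  tgt : edge -> vert;
  alpha : edge -> C;
  qw : vert -> C;
  mom : vert -> 'rV[C]_d
}.

Section Symanzik.
Variables (C : numClosedFieldType) (d : nat).
Implicit Type G : wgraph C d.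

Definition is_loop G (e : edge G) : bool := src e == tgt e.

Definition eps G (e : edge G) (v : vert G) : C :=
  if is_loop e then 0
  else if src e == v then 1
  else if tgt e == v then -1
  else 0.

(* Q_G indexed by E ⊔ V : edges first (via enum_val), then vertices. *)
Definition QG G : 'M[C]_(#|edge G| + #|vert G|) :=
  block_mx
    (\matrix_(i, j) (if i == j then alpha (enum_val i) else 0))
    (\matrix_(i, j) (- 'i * eps (enum_val i) (enum_val j)))
    (\matrix_(i, j) (- 'i * eps (enum_val j) (enum_val i)))
    (\matrix_(i, j) (if i == j then qw (enum_val i) else 0)).

Definition vidx G (v : vert G) : 'I_(#|edge G| + #|vert G|) :=
  rshift #|edge G| (enum_rank v).

Definition dotp (u w : 'rV[C]_d) : C := \sum_(k < d) u 0 k * w 0 k.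

Definition UG G : C := \det (QG G).

Definition VG G : C :=
  UG G * \sum_(v : vert G) \sum_(v' : vert G)
           dotp (mom v) (mom v') * invmx (QG G) (vidx v) (vidx v').

Definition del G (e : edge G) : wgraph C d :=
  @WGraph C d (vert G) {f : edge G | f != e}
    (fun f => src (val f)) (fun f => tgt (val f))
    (fun f => alpha (val f)) (@qw _ _ G) (@mom _ _ G).

(* Contraction G / e for a non-loop e from v1 = src e to v2 = tgt e:
   v2 is removed and identified with v1 (which plays the role of v12). *)
Definition cvert G (e : edge G) := {v : vert G | v != tgt e}.

Definition cmap G (e : edge G) (h : src e != tgt e) (v : vert G) : cvert e :=
  insubd (exist (fun v => v != tgt e) (src e) h : cvert e) v.

Definition contr G (e : edge G) (h : src e != tgt e) : wgraph C d :=
  @WGraph C d (cvert e) {f : edge G | f != e}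
    (fun f => cmap h (src (val f))) (fun f => cmap h (tgt (val f)))
    (fun f => alpha (val f))
    (fun v => if val v == src e then qw (src e) + qw (tgt e) else qw (val v))
    (fun v => if val v == src e then mom (src e) + mom (tgt e) else mom (val v)).

End Symanzik.

(* Main.v *)
Require Import Defs.
From mathcomp Require Import all_boot all_order all_algebra all_fingroup.
Set Implicit Arguments. Unset Strict Implicit. Unset Printing Implicit Defensive.
Import Order.TTheory GRing.Theory Num.Theory.
Local Open Scope ring_scope.

Section Reindex.
Variable (R : comNzRingType) (T : finType) (M : T -> T -> R).
Definition mxg n (g : 'I_n -> T) : 'M[R]_n := \matrix_(i, j) M (g i) (g j).

Lemma det_reindex n m (g1 : 'I_n -> T) (g2 : 'I_m -> T) :
  injective g1 -> injective g2 ->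
  (forall i, exists j, g1 i == g2 j) -> (forall j, exists i, g2 j == g1 i) ->
  \det (mxg g1) = \det (mxg g2).
Proof.
move=> i1 i2 h12 h21.
pose f12 i := xchoose (h12 i). pose f21 j := xchoose (h21 j).
have f12E i : g1 i = g2 (f12 i) by apply/eqP; exact: (xchooseP (h12 i)).
have f21E j : g2 j = g1 (f21 j) by apply/eqP; exact: (xchooseP (h21 j)).
have inj12 : injective f12 by move=> a b e; apply: i1; rewrite !f12E e.
have inj21 : injective f21 by move=> a b e; apply: i2; rewrite !f21E e.
have nm : n = m.
  have := @leq_card _ _ _ inj12; have := @leq_card _ _ _ inj21; rewrite !card_ord => a b.
  by apply/eqP; rewrite eqn_leq a b.
subst m.
pose s := perm inj12.
have -> : mxg g1 = perm_mx s *m mxg g2 *m (perm_mx s)^T.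
  rewrite tr_perm_mx -col_permE -row_permE.
  by apply/matrixP => i j; rewrite !mxE !permE -!f12E.
rewrite !det_mulmx det_tr det_perm mulrC mulrA -expr2 sqrr_sign mul1r.
done.
Qed.
End Reindex.

Section Contract.
Variable (R : comNzRingType).

Lemma sum_kron m (F : 'I_m -> R) (i a b : 'I_m) :
  \sum_k (((i == k)%:R + ((i == a) && (k == b))%:R) * F k) = F i + (i == a)%:R * F b.
Proof.
under eq_bigr do rewrite mulrDl.
rewrite big_split /=; congr (_ + _).
  rewrite (bigD1 i) //= eqxx mul1r big1 ?addr0 // => k /negbTE.
  by rewrite eq_sym => ->; rewrite mul0r.
rewrite (bigD1 b) //= eqxx andbT big1 ?addr0 // => k /negbTE ->.
by rewrite andbF mul0r.
Qed.

Lemma det_contract n (A : 'M[R]_(n.+3)) :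
  let i1 := (@Ordinal n.+3 1 isT) in let i2 := (@Ordinal n.+3 2 isT) in
  let l := fun i : 'I_n.+1 => lift ord0 (lift ord0 i) in
  (forall j, j != i1 -> j != i2 -> A ord0 j = 0) -> A ord0 i2 = - A ord0 i1 ->
  (forall i, i != i1 -> i != i2 -> A i ord0 = 0) -> A i2 ord0 = - A i1 ord0 ->
  \det A = - (A ord0 i1 * A i1 ord0) *
    \det (\matrix_(i, j) (A (l i) (l j) + (i == ord0)%:R * A i1 (l j)
       + (j == ord0)%:R * A (l i) i1 + ((i == ord0) && (j == ord0))%:R * A i1 i1)).
Proof.
move=> i1 i2 l hr hr2 hc hc2.
pose P : 'M[R]_(n.+3) := \matrix_(i,j) ((i == j)%:R + ((i == i2) && (j == i1))%:R).
have dP : \det P = 1.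
  rewrite det_trig; last first.
    apply/is_trig_mxP => i j lij; rewrite !mxE.
    rewrite (_ : (i == j) = false); last by apply/negbTE; rewrite -val_eqE /= neq_ltn lij.
    idtac.
    have [ei|_] := eqVneq i i2; have [ej|_] := eqVneq j i1; rewrite /= ?add0r //.
    by rewrite ei ej in lij.
  rewrite big1 // => i _; rewrite !mxE eqxx.
  have [ei|_] := eqVneq i i2; last by rewrite /= addr0.
  by rewrite ei /= addr0.
pose A' := P *m A *m P^T.
have dA' : \det A' = \det A by rewrite !det_mulmx det_tr dP mul1r mulr1.
have A'E i j : A' i j = A i j + (i == i2)%:R * A i1 j + (j == i2)%:R * A i i1
     + ((i == i2) && (j == i2))%:R * A i1 i1.
  have e1 k : (P *m A) i k = A i k + (i == i2)%:R * A i1 k.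
    by rewrite mxE; under eq_bigr do rewrite mxE; rewrite sum_kron.
  rewrite /A' mxE; under eq_bigr do rewrite e1 !mxE mulrC.
  rewrite sum_kron.
  rewrite mulrDr !addrA; congr (_ + _).
  by rewrite mulrA -natrM mulnb andbC.
clearbody A'.
have r0 j : A' ord0 j = (j == i1)%:R * A ord0 i1.
  rewrite A'E /= !mul0r !addr0.
  have [->|n1] := eqVneq j i1; first by rewrite /= mul0r addr0 mul1r.
  have [->|n2] := eqVneq j i2; first by rewrite /= hr2 mul1r mul0r addNr.
  by rewrite hr //= mul0r addr0.
have c0 i : A' i ord0 = (i == i1)%:R * A i1 ord0.
  rewrite A'E /= !mul0r andbF !mul0r !addr0.
  have [->|n1] := eqVneq i i1; first by rewrite /= ?mul0r ?addr0 mul1r.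
  have [->|n2] := eqVneq i i2; first by rewrite /= hc2 mul1r addNr ?mul0r.
  by rewrite hc //= ?mul0r ?addr0.
rewrite -dA' (expand_det_row _ ord0) (bigD1 i1) //= big1 ?addr0; last first.
  by move=> j /negbTE nj; rewrite r0 nj mul0r mul0r.
rewrite r0 eqxx mul1r /cofactor /=.
set B := row' ord0 (col' i1 A').
rewrite (expand_det_col _ ord0) (bigD1 ord0) //= big1 ?addr0; last first.
  move=> i ni; rewrite !mxE (_ : lift i1 ord0 = ord0); last by apply: val_inj.
  rewrite c0 (_ : (lift ord0 i == i1) = false) ?mul0r //.
  apply/negbTE; apply: contra ni => /eqP/(congr1 val) /= h.
  by apply/eqP; apply: val_inj => /=; move: h; rewrite /bump /=; case: (nat_of_ord i).
rewrite !mxE (_ : lift i1 ord0 = ord0); last by apply: val_inj.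
rewrite c0 (_ : lift ord0 ord0 = i1); last by apply: val_inj.
rewrite eqxx mul1r /cofactor /= expr0 mul1r expr1.
rewrite mulN1r mulrN mulrA -mulNr; congr (_ * _); congr (\det _).
apply/matrixP => i j; rewrite !mxE.
rewrite (_ : lift i1 (lift ord0 j) = l j); last by apply: val_inj.
rewrite A'E.
have ei k : (l k == i2) = (k == ord0).
  by rewrite -val_eqE /= -[RHS]val_eqE /= /bump /=; case: (nat_of_ord k).
by rewrite !ei.
Qed.
End Contract.

Lemma eps_case (R : ringType) (V : eqType) (s t w v1 v2 : V) : v1 <> v2 -> w <> v2 ->
  let cm a := if a == v2 then v1 else a in
  (if cm s == cm t then 0 else if cm s == w then 1 else if cm t == w then -1 else 0 : R)
  = (if s == t then 0 else if s == w then 1 else if t == w then -1 else 0)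
    + (w == v1)%:R * (if s == t then 0 else if s == v2 then 1 else if t == v2 then -1 else 0).
Proof.
move=> h1 h2 cm; rewrite /cm.
case: (s =P v2) => [->|hs]; case: (t =P v2) => [->|ht]; rewrite ?eqxx; repeat (case: eqP => ?; subst => //=); rewrite ?mul1r ?mul0r ?addr0 ?add0r ?subrr ?addrN ?addNr; try congruence. all: by rewrite /= ?mul0r ?addr0.
Qed.

Lemma vv_case (R : comNzRingType) (V : eqType) (q x : V -> R) (p r v1 v2 : V) :
  p != v2 -> r != v2 -> v1 != v2 ->
  (if p == r then (if p == v1 then q v1 + q v2 else q p) else 0)
  + (if p == v1 then x v1 + x v2 else x p) * (if r == v1 then x v1 + x v2 else x r)
  = (if p == r then q p else 0) + x p * x r
    + (p == v1)%:R * ((if v2 == r then q v2 else 0) + x v2 * x r)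
    + (r == v1)%:R * ((if p == v2 then q p else 0) + x p * x v2)
    + ((p == v1) && (r == v1))%:R * ((if v2 == v2 then q v2 else 0) + x v2 * x v2).
Proof.
move=> hp hr h12.
rewrite eqxx (negbTE hp) [v2 == r]eq_sym (negbTE hr).
case: (p =P v1) => [->|np]; case: (r =P v1) => [->|nr]; rewrite ?eqxx /= ?add0r ?mul1r ?mul0r ?addr0.
- rewrite !mulrDl !mulrDr !addrA; rewrite -!addrA; congr (_ + _).
  rewrite [x v2 * x v1]mulrC addrCA; congr (_ + _); rewrite addrCA; congr (_ + _).
  by rewrite addrCA.
- have -> : (v1 == r) = false by apply/eqP => e; apply: nr; rewrite e.
  by rewrite mulrDl addrA.
- have -> : (p == v1) = false by apply/eqP.
  by rewrite mulrDr addrA.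
- by [].
Qed.

Lemma det_rank1 (R : fieldType) n (Q : 'M[R]_n) (y : 'cV[R]_n) : Q \in unitmx ->
  \det (Q + y *m y^T) = \det Q * (1 + (y^T *m invmx Q *m y) 0 0).
Proof.
move=> uQ.
pose X : 'M[R]_(n + 1) := block_mx Q y (- y^T) 1%:M.
have e1 : X = block_mx (Q + y *m y^T) y 0 1%:M *m block_mx 1%:M 0 (- y^T) 1%:M.
  rewrite mulmx_block ?mulmx1 ?mulmx0 ?mul0mx ?mul1mx ?addr0 ?add0r ?mulmxN. by rewrite addrK.
have e2 : X = block_mx Q 0 (- y^T) (1%:M + y^T *m invmx Q *m y)
              *m block_mx 1%:M (invmx Q *m y) 0 1%:M.
  rewrite mulmx_block ?mulmx1 ?mulmx0 ?mul0mx ?mul1mx ?addr0 ?add0r mulKVmx //.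
  by rewrite mulNmx mulmxA addrCA addNr addr0.
have := congr1 determinant e2; rewrite {1}e1 !det_mulmx det_ublock det_lblock.
rewrite det_lblock det_ublock !det1 !mulr1 det_mx11 => ->.
by rewrite !mxE eqxx.
Qed.

Section Graph.
Variables (C : numClosedFieldType) (d : nat).
Implicit Type G : wgraph C d.

Definition Mf G (x : vert G -> C) (a b : (edge G + vert G)%type) : C :=
  match a, b with
  | inl f, inl f' => if f == f' then alpha f else 0
  | inl f, inr v => - 'i * eps f v
  | inr v, inl f => - 'i * eps f v
  | inr v, inr w => (if v == w then qw v else 0) + x v * x w
  end.

Definition idx G (i : 'I_(#|edge G| + #|vert G|)) : (edge G + vert G)%type :=
  match split i with inl a => inl (enum_val a) | inr b => inr (enum_val b) end.

Definition detM G (x : vert G -> C) := \det (mxg (Mf x) (@idx G)).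

Lemma idx_inj G : injective (@idx G).
Proof.
move=> i j; rewrite /idx.
case: (split_ordP i) => a ->; case: (split_ordP j) => b -> //.
  by case=> /enum_val_inj ->.
by case=> /enum_val_inj ->.
Qed.

Lemma idx_surj G (t : (edge G + vert G)%type) : exists i, t == idx i.
Proof.
case: t => [f|v].
  by exists (lshift _ (enum_rank f)); rewrite /idx (unsplitK (inl _)) enum_rankK.
by exists (rshift _ (enum_rank v)); rewrite /idx (unsplitK (inr _)) enum_rankK.
Qed.

Lemma QG_Mf G : QG G = mxg (Mf (fun _ : vert G => 0)) (@idx G).
Proof.
apply/matrixP => i j; rewrite /QG /idx [RHS]mxE.
case: (split_ordP i) => a ei; case: (split_ordP j) => b ej; subst i j;
  rewrite ?block_mxEul ?block_mxEur ?block_mxEdl ?block_mxEdr !mxE /=.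
- by rewrite (inj_eq enum_val_inj).
- by [].
- by [].
- by rewrite (inj_eq enum_val_inj) mul0r addr0.
Qed.


Definition hd G (e : edge G) (a : (edge (del e) + vert (del e))%type) : (edge G + vert G)%type :=
  match a with inl f => inl (val f) | inr v => inr v end.

Lemma Mf_del G (e : edge G) (x : vert G -> C) a b :
  Mf (G:=del e) x a b = Mf x (hd a) (hd b).
Proof. by case: a => [f|v]; case: b => [f'|w]. Qed.

Lemma hd_inj G (e : edge G) : injective (@hd G e).
Proof. by case=> [f|v] [f'|w] //= [] => [/val_inj|] ->. Qed.

Definition hc G (e : edge G) (h : src e != tgt e)
  (a : (edge (contr h) + vert (contr h))%type) : (edge G + vert G)%type :=
  match a with inl f => inl (val f) | inr v => inr (val v) end.

Lemma hc_inj G (e : edge G) h : injective (@hc G e h).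
Proof. by case=> [f|v] [f'|w] //= [] /val_inj ->. Qed.

Definition xc G (e : edge G) (h : src e != tgt e) (x : vert G -> C) (v : vert (contr h)) : C :=
  if val v == src e then x (src e) + x (tgt e) else x (val v).

Definition Mt G (e : edge G) (x : vert G -> C) (a b : (edge G + vert G)%type) : C :=
  Mf x a b + (a == inr (src e))%:R * Mf x (inr (tgt e)) b
  + (b == inr (src e))%:R * Mf x a (inr (tgt e))
  + ((a == inr (src e)) && (b == inr (src e)))%:R * Mf x (inr (tgt e)) (inr (tgt e)).

Lemma valc G (e : edge G) (h : src e != tgt e) a :
  val (cmap h a) = if a == tgt e then src e else a.
Proof. by rewrite /cmap val_insubd /=; case: eqP. Qed.

Lemma eps_contr G (e : edge G) (h : src e != tgt e) (f : edge (contr h)) (v : vert (contr h)) :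
  eps f v = eps (val f) (val v) + (val v == src e)%:R * eps (val f) (tgt e).
Proof.
rewrite /eps /is_loop /= -!val_eqE /= !valc.
apply: eps_case; first by apply/eqP.
by apply/eqP; exact: (valP v).
Qed.

Lemma Mf_contr G (e : edge G) (h : src e != tgt e) (x : vert G -> C) a b :
  Mf (G:=contr h) (xc x) a b = Mt e x (hc a) (hc b).
Proof.
case: a => [f|v]; case: b => [f'|w]; rewrite /Mt /=.
- by rewrite !mul0r !addr0.
- by rewrite -!sum_eqE /= eps_contr mulrDr !mul0r !addr0 mulrCA.
- by rewrite -!sum_eqE /= andbF eps_contr mulrDr !mul0r !addr0 mulrCA.
- rewrite -!sum_eqE /= /xc; apply: vv_case.
  + exact: (valP v).
  + exact: (valP w).
  + exact: h.
Qed.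

Lemma hd_ne G (e : edge G) a : @hd G e a != inl e.
Proof. by case: a => [f|v] //=; rewrite -sum_eqE /=; exact: (valP f). Qed.

Lemma hc_ne G (e : edge G) h a : @hc G e h a != inl e.
Proof. by case: a => [f|v] //=; rewrite -sum_eqE /=; exact: (valP f). Qed.

Lemma hc_ne2 G (e : edge G) h a : @hc G e h a != inr (tgt e).
Proof. by case: a => [f|v] //=; rewrite -sum_eqE /=; exact: (valP v). Qed.

Lemma detM_rec G (e : edge G) (h : src e != tgt e) (x : vert G -> C) :
  detM x = alpha e * detM (G:=del e) x + detM (G:=contr h) (xc x).
Proof.
set T := (edge G + vert G)%type.
set v1 := src e; set v2 := tgt e.
have h12 : v1 != v2 := h.
have h21 : (v2 == v1) = false by rewrite eq_sym (negbTE h12).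
pose s3 : seq T := [:: inl e; inr v2; inr v1].
pose rest := enum [pred t : T | t \notin s3].
pose L := s3 ++ rest.
have uL : uniq L.
  rewrite cat_uniq enum_uniq andbT /= !inE -!sum_eqE /= eq_sym h /=.
  by apply/hasPn => t; rewrite mem_enum inE.
have sL : size L = (size rest).+3 by rewrite /L size_cat.
pose g : 'I_(size rest).+3 -> T := fun i => nth (inl e) L i.
have ginj : injective g.
  by move=> i j /eqP; rewrite nth_uniq ?sL ?ltn_ord // => /eqP/val_inj.
have gsurj t : exists j, t == g j.
  have tL : t \in L by rewrite mem_cat; apply/orP; case: (boolP (t \in s3)) => H; [left|right; rewrite mem_enum inE].
  idtac.
  have hi : (index t L < (size rest).+3)%N by rewrite -sL index_mem.
  by exists (Ordinal hi); rewrite /g /= nth_index.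
have gl0 i : g (lift ord0 i) != inl e.
  apply/eqP => E; have := neq_lift ord0 i.
  by rewrite (ginj (lift ord0 i) ord0 E) eqxx.
pose M := Mf x.
pose M0 (a b : T) := match a, b with
  | inl f, inl f' => if (f == e) && (f' == e) then 0 else M a b
  | _, _ => M a b end.
have M0E a b : a != inl e -> M0 a b = M a b.
  case: a => [f|v] //; case: b => // f' hf.
  by rewrite -sum_eqE /= in hf; rewrite /M0 (negbTE hf).
have S1 : detM x = \det (mxg M g).
  apply: det_reindex; [exact: idx_inj | exact: ginj | | ].
    by move=> i; exact: gsurj.
  by move=> j; exact: idx_surj.
have S2 : \det (mxg M g) = alpha e * \det (mxg M (g \o lift ord0)) + \det (mxg M0 g).
  rewrite (expand_det_row (mxg M g) ord0) (expand_det_row (mxg M0 g) ord0) !(big_ord_recl (size rest).+2).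
  have c00 : cofactor (mxg M g) ord0 ord0 = \det (mxg M (g \o lift ord0)).
    rewrite /cofactor expr0 mul1r; congr (\det _); apply/matrixP => i j; rewrite !mxE.
    by [].
  have ecof j : cofactor (mxg M g) ord0 j = cofactor (mxg M0 g) ord0 j.
    rewrite /cofactor; congr (_ * \det _); apply/matrixP => a b; rewrite !mxE.
    by rewrite M0E.
  rewrite c00 !mxE /= eqxx /= mul0r add0r; congr (_ + _).
  apply: eq_bigr => i _; rewrite ecof !mxE; congr (_ * _).
  have := gl0 i; case: (g (lift ord0 i)) => [f|v] // hf.
  by rewrite -sum_eqE /= in hf; rewrite /M0 /= eqxx (negbTE hf).
have S3 : \det (mxg M (g \o lift ord0)) = detM (G:=del e) x.
  rewrite /detM.
  have -> : mxg (Mf (G:=del e) x) (@idx _) = mxg M (@hd G e \o @idx _).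
    by apply/matrixP => i j; rewrite !mxE Mf_del.
  apply: det_reindex.
  - by move=> i j /ginj /lift_inj.
  - by move=> i j /= /hd_inj /idx_inj.
  - move=> i; have := gl0 i; rewrite /=; case: (g (lift ord0 i)) => [f|v] hf.
      rewrite -sum_eqE /= in hf.
      have [j hj] := idx_surj (inl (exist _ f hf : edge (del e)) : (edge (del e) + vert (del e))%type).
      by exists j; rewrite -(eqP hj).
    have [j hj] := idx_surj (inr v : (edge (del e) + vert (del e))%type).
    by exists j; rewrite -(eqP hj).
  - move=> j; have [k hk] := gsurj (@hd G e (idx j)).
    case: (unliftP ord0 k) hk => [k'|] -> hk; first by exists k'.
    by have := hd_ne (idx j); rewrite (eqP hk) eqxx.
pose i1 := @Ordinal (size rest).+3 1 isT.
pose i2 := @Ordinal (size rest).+3 2 isT.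
pose l := fun i : 'I_(size rest).+1 => lift ord0 (lift ord0 i).
have eps_e v : eps e v = (v == v1)%:R - (v == v2)%:R.
  rewrite /eps /is_loop (negbTE h) -/v1 -/v2 [v1 == v]eq_sym [v2 == v]eq_sym.
  case: (v =P v1) => [->|n1]; first by rewrite (negbTE h) subr0.
  by case: (v =P v2) => _; rewrite /= ?sub0r ?subr0 ?oppr0; reflexivity.
have grest j : j != ord0 -> j != i1 -> j != i2 -> g j \notin s3.
  case: j => [[|[|[|k]]] hk] //= _ _ _.
  have : nth (inl e) rest k \in rest by apply: mem_nth.
  by rewrite mem_enum inE.
have r1 j : j != i1 -> j != i2 -> mxg M0 g ord0 j = 0.
  move=> n1 n2; rewrite mxE.
  have [->|n0] := eqVneq j ord0; first by rewrite /M0 /= eqxx.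
  have := grest j n0 n1 n2; case: (g j) => [f|v]; rewrite !inE -!sum_eqE /= => hf.
    by rewrite orbF in hf; rewrite /M0 /M /= eqxx [e == f]eq_sym (negbTE hf).
  move: hf; rewrite negb_or => /andP[a b].
  by rewrite eps_e (negbTE a) (negbTE b) subrr mulr0.
have c1 j : j != i1 -> j != i2 -> mxg M0 g j ord0 = 0.
  move=> n1 n2; rewrite mxE.
  have [->|n0] := eqVneq j ord0; first by rewrite /M0 /= eqxx.
  have := grest j n0 n1 n2; case: (g j) => [f|v]; rewrite !inE -!sum_eqE /= => hf.
    rewrite orbF in hf; rewrite /M0 /M /= eqxx (negbTE hf); by [].
  move: hf; rewrite negb_or => /andP[a b].
  by rewrite /M0 /M /= eps_e (negbTE a) (negbTE b) subrr mulr0.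
have r2 : mxg M0 g ord0 i2 = - mxg M0 g ord0 i1.
  rewrite !mxE /M0 /M /= !eps_e eqxx h21 (negbTE h12) /=.
  by rewrite eqxx subr0 sub0r mulrN opprK mulr1.
have c2 : mxg M0 g i2 ord0 = - mxg M0 g i1 ord0.
  rewrite !mxE /M0 /M /= !eps_e eqxx h21 (negbTE h12) /=.
  by rewrite eqxx subr0 sub0r mulrN opprK mulr1.
have := @det_contract _ _ (mxg M0 g); cbv zeta.
move=> /(_ r1 r2 c1 c2) S4.
have k1 : - (mxg M0 g ord0 i1 * mxg M0 g i1 ord0) = 1.
  rewrite !mxE /M0 /M /= !eps_e eqxx h21 /= sub0r mulrN1 opprK.
  by rewrite mulCii opprK.
have el k : (g (l k) == inr v1) = (k == ord0).
  rewrite (_ : inr v1 = g i2) // (inj_eq ginj) -val_eqE /= -[RHS]val_eqE /=.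
  by case: k => [[|k] hk].
have S4' : \det (mxg M0 g) = \det (mxg (Mt e x) (g \o l)).
  rewrite S4 k1 mul1r; congr (\det _); apply/matrixP => i j; rewrite !mxE.
  by rewrite !M0E ?gl0 // /Mt /= !el.
have S5 : \det (mxg (Mt e x) (g \o l)) = detM (G:=contr h) (xc x).
  rewrite /detM.
  have -> : mxg (Mf (G:=contr h) (xc x)) (@idx _) = mxg (Mt e x) (@hc G e h \o @idx _).
    by apply/matrixP => i j; rewrite !mxE Mf_contr.
  apply: det_reindex.
  - by move=> i j /ginj /lift_inj /lift_inj.
  - by move=> i j /= /hc_inj /idx_inj.
  - move=> i; have := gl0 (lift ord0 i).
    have : g (l i) != inr v2.
      rewrite (_ : inr v2 = g i1) // (inj_eq ginj) -val_eqE /=.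
      by case: i.
    rewrite /=; case: (g (lift ord0 (lift ord0 i))) => [f|v] hv hf.
      rewrite -sum_eqE /= in hf.
      have [j hj] := idx_surj (inl (exist _ f hf : edge (contr h)) : (edge (contr h) + vert (contr h))%type).
      by exists j; rewrite -(eqP hj).
    rewrite -sum_eqE /= in hv.
    have [j hj] := idx_surj (inr (exist _ v hv : vert (contr h)) : (edge (contr h) + vert (contr h))%type).
    by exists j; rewrite -(eqP hj).
  - move=> j; have [k hk] := gsurj (@hc G e h (idx j)).
    case: (unliftP ord0 k) hk => [k'|] -> hk; last first.
      by have := hc_ne (idx j); rewrite (eqP hk) eqxx.
    case: (unliftP ord0 k') hk => [k''|] -> hk; first by exists k''.
    by have := hc_ne2 (idx j); rewrite (eqP hk) eqxx.
by rewrite S1 S2 S3 S4' S5.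
Qed.

Lemma detM_ext G (x y : vert G -> C) : x =1 y -> detM x = detM y.
Proof.
move=> exy; rewrite /detM; congr (\det _); apply/matrixP => i j; rewrite !mxE.
by case: (idx i) => [f|v]; case: (idx j) => [f'|w] //=; rewrite !exy.
Qed.

Lemma U_rec G (e : edge G) (h : src e != tgt e) :
  UG G = alpha e * UG (del e) + UG (contr h).
Proof.
rewrite /UG !QG_Mf -/(detM _) -/(detM _) -/(detM _) (detM_rec h).
congr (_ + _); apply: detM_ext => v; rewrite /xc; by case: ifP; rewrite ?addr0.
Qed.

Definition yv G (x : vert G -> C) : 'cV[C]_(#|edge G| + #|vert G|) :=
  \col_i (match split i with inl _ => 0 | inr b => x (enum_val b) end).

Lemma Mf_yv G (x : vert G -> C) : mxg (Mf x) (@idx G) = QG G + yv x *m (yv x)^T.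
Proof.
rewrite QG_Mf; apply/matrixP => i j; rewrite !mxE big_ord1 !mxE /idx.
by case: (split i) => a; case: (split j) => b /=; rewrite ?mul0r ?mulr0 ?addr0 ?mul0r.
Qed.

Lemma quad_yv G (x : vert G -> C) (Q : 'M[C]_(#|edge G| + #|vert G|)) :
  ((yv x)^T *m Q *m yv x) 0 0 =
  \sum_(v : vert G) \sum_(v' : vert G) x v' * x v * Q (vidx v') (vidx v).
Proof.
rewrite mxE big_split_ord /= big1 ?add0r; last first.
  by move=> a _; rewrite !mxE (unsplitK (inl _)) /= mulr0.
rewrite (big_enum_val (fun v => \sum_(v' : vert G) x v' * x v * Q (vidx v') (vidx v))) /=.
apply: eq_bigr => b _; rewrite !mxE (unsplitK (inr _)) /=.
rewrite big_distrl /= big_split_ord /= big1 ?add0r; last first.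
  by move=> a _; rewrite !mxE (unsplitK (inl _)) /= mul0r mul0r.
rewrite (big_enum_val (fun v' => x v' * x (enum_val b) * Q (vidx v') (vidx (enum_val b)))) /=.
apply: eq_bigr => a _; rewrite !mxE (unsplitK (inr _)) /= /vidx !enum_valK.
by rewrite mulrAC.
Qed.

Lemma VG_W G : QG G \in unitmx ->
  VG G = \sum_(k < d) (detM (fun v : vert G => mom v 0 k) - UG G).
Proof.
move=> uQ.
have hk k : detM (fun v : vert G => mom v 0 k) - UG G =
   UG G * \sum_(v : vert G) \sum_(v' : vert G)
      mom v' 0 k * mom v 0 k * invmx (QG G) (vidx v') (vidx v).
  rewrite /detM Mf_yv det_rank1 // quad_yv /UG.
  by rewrite mulrDr mulr1 addrAC subrr add0r.
under eq_bigr do rewrite hk.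
rewrite /VG -mulr_sumr; congr (_ * _).
symmetry; rewrite exchange_big; under eq_bigr do rewrite exchange_big.
rewrite exchange_big; apply: eq_bigr => v _; apply: eq_bigr => v' _.
by rewrite /dotp mulr_suml.
Qed.

Lemma prod_enum (T : finType) (F : T -> C) : \prod_(i < #|T|) F (enum_val i) = \prod_x F x.
Proof. by rewrite -(big_enum_val F). Qed.

Definition dv G (i : 'I_(#|edge G| + #|vert G|)) : C :=
  match split i with inl a => alpha (enum_val a) | inr b => qw (enum_val b) end.

Lemma QG_loop G : (forall e : edge G, is_loop e) -> QG G = diag_mx (\row_i dv i).
Proof.
move=> hl; rewrite QG_Mf; apply/matrixP => i j; rewrite !mxE /idx /dv.
case: (split_ordP i) => a ->; case: (split_ordP j) => b ->; rewrite ?eq_shift /=.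
- by rewrite (inj_eq enum_val_inj); case: eqP => //= ->; rewrite eqxx.
- by rewrite /eps hl mulr0.
- by rewrite /eps hl mulr0.
- rewrite (inj_eq enum_val_inj) mulr0 addr0.
  by case: eqP => //= ->; rewrite eqxx.
Qed.

Lemma UG_loop G : (forall e : edge G, is_loop e) ->
  UG G = (\prod_(e : edge G) alpha e) * \prod_(v : vert G) qw v.
Proof.
move=> hl; rewrite /UG QG_loop // det_diag big_split_ord /=.
rewrite -(prod_enum (@alpha _ _ G)) -(prod_enum (@qw _ _ G)).
by congr (_ * _); apply: eq_bigr => a _; rewrite !mxE /dv ?(unsplitK (inl _)) ?(unsplitK (inr _)).
Qed.

Lemma VG_loop G : (forall e : edge G, is_loop e) -> (forall v : vert G, qw v != 0) ->
  (forall e : edge G, alpha e != 0) ->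
  VG G = (\prod_(e : edge G) alpha e) *
         \sum_(v : vert G) (dotp (mom v) (mom v) * \prod_(v' : vert G | v' != v) qw v').
Proof.
move=> hl hq ha.
have dvnz (i : 'I_(#|edge G| + #|vert G|)) : dv i != 0 by rewrite /dv; case: (split i) => a; [exact: ha | exact: hq].
set D' := diag_mx (\row_(i < #|edge G| + #|vert G|) (dv i)^-1).
have inv : invmx (QG G) = D'.
  have e : QG G *m D' = 1%:M.
    rewrite QG_loop // mul_diag_mx; apply/matrixP => i j; rewrite !mxE.
    have [->|ne] := eqVneq i j; first by rewrite mulr1n mulfV.
    by rewrite mulr0n mulr0.
  have [uQ _] := mulmx1_unit e.
  by rewrite -[D'](mulKmx uQ) e mulmx1.
rewrite /VG inv UG_loop //.
have inner v : \sum_(v' : vert G) dotp (mom v) (mom v') * D' (vidx v) (vidx v')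
    = dotp (mom v) (mom v) / qw v.
  rewrite (bigD1 v) //= big1 ?addr0.
    by rewrite !mxE eqxx mulr1n /dv /vidx (unsplitK (inr _)) enum_rankK.
  move=> v' nv.
  by rewrite !mxE /vidx eq_rshift (inj_eq enum_rank_inj) eq_sym (negbTE nv) mulr0n mulr0.
rewrite (eq_bigr _ (fun v _ => inner v)).
rewrite -mulrA; congr (_ * _); rewrite mulr_sumr; apply: eq_bigr => v _.
by rewrite (bigD1 v) //= mulrC -mulrA mulKf.
Qed.

Lemma card_del G (e : edge G) : #|edge (del e)| = #|edge G|.-1.
Proof. by rewrite card_sig -(cardC1 e); apply: eq_card => f; rewrite !inE. Qed.

Lemma U_pos n : forall G : wgraph C d, (#|edge G| <= n)%N ->
  (forall e : edge G, 0 < alpha e) -> (forall v : vert G, 0 < qw v) -> 0 < UG G.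
Proof.
elim: n => [|n IH] G hE ha hq.
  case: (pickP (fun e : edge G => ~~ is_loop e)) => [e _ | hno].
    have : (0 < #|edge G|)%N by apply/card_gt0P; exists e.
    by move=> /leq_trans/(_ hE).
  rewrite UG_loop; last by move=> e; have := hno e => /= /negbFE.
  by apply: mulr_gt0; apply: prodr_gt0 => i _.
case: (pickP (fun e : edge G => ~~ is_loop e)) => [e he | hno]; last first.
  rewrite UG_loop; last by move=> e; have := hno e => /= /negbFE.
  by apply: mulr_gt0; apply: prodr_gt0 => i _.
have h : src e != tgt e := he.
have cE : (#|edge (del e)| <= n)%N.
  rewrite card_del; move: hE; have : (0 < #|edge G|)%N by apply/card_gt0P; exists e.
  by case: #|edge G|.
rewrite (U_rec h); apply: addr_gt0.
  apply: mulr_gt0 => //; apply: IH; [exact: cE | move=> f; exact: ha | exact: hq].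
apply: IH; [exact: cE | move=> f; exact: ha | move=> v /=].
by case: ifP => _; rewrite ?addr_gt0.
Qed.

End Graph.

Theorem theorem3p3 (C : numClosedFieldType) (d : nat) (G : wgraph C d)
  (halpha : forall e : edge G, 0 < alpha e)
  (hq : forall v : vert G, 0 < qw v)
  (hp : forall (v : vert G) (k : 'I_d), mom v 0 k \is Num.real) :
  (forall (e : edge G) (h : src e != tgt e),
      UG G = alpha e * UG (del e) + UG (contr h) /\
      VG G = alpha e * VG (del e) + VG (contr h)) /\
  ((forall e : edge G, is_loop e) ->
      UG G = (\prod_(e : edge G) alpha e) * \prod_(v : vert G) qw v /\
      VG G = (\prod_(e : edge G) alpha e) *
             \sum_(v : vert G) (dotp (mom v) (mom v) *
                                \prod_(v' : vert G | v' != v) qw v')).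
Proof.
have unit (H : wgraph C d) : (forall e : edge H, 0 < alpha e) -> (forall v : vert H, 0 < qw v) ->
    QG H \in unitmx.
  move=> ha hq'; rewrite unitmxE unitfE; apply: lt0r_neq0.
  exact: (@U_pos C d #|edge H| H (leqnn _) ha hq').
split.
  move=> e h; split; first exact: U_rec.
  have uG := unit G halpha hq.
  have uD : QG (del e) \in unitmx by apply: unit => // f; exact: halpha.
  have uC : QG (contr h) \in unitmx.
    apply: unit => [f|v]; first exact: halpha.
    by rewrite /=; case: ifP => _; rewrite ?addr_gt0.
  rewrite !VG_W // [in RHS]mulr_sumr -big_split (U_rec h); apply: eq_bigr => k _ /=.
  rewrite (detM_rec h) mulrBr opprD addrACA; congr (_ + (_ - _)).
  apply: detM_ext => v; rewrite /xc /=; by case: ifP => _; rewrite ?mxE.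
move=> hl; split; first exact: UG_loop.
apply: VG_loop => // [v|e]; [exact: lt0r_neq0 | exact: lt0r_neq0].
Qed.
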